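(* Let $(G,\sigma)$ be a finite connected signed graph satisfying $CD^{\sigma}(K,N)$ for some $K\in\mathbb{R}$, $N\in(0,\infty]$, and let $f:V\to\mathbb{R}$ be an eigenfunction of $\Delta^{\sigma}$ to a nonzero eigenvalue $\lambda^{\sigma}$. Then for all $x\in V$ and all $\varepsilon>0$, \[ |\nabla^{\sigma}f|^{2}(x)\leq\left(\left((2+\varepsilon)^{2}-\frac{4}{N}\right)\frac{\lambda^{\sigma}}{\varepsilon}-\left(\frac{4}{\varepsilon}+2\right)K\right)\cdot \max_{z\in V}f^{2}(z), \] with the convention $\frac1N=0$ if $N=\infty$.
   Context: $G=(V,E)$ is a finite simple connected graph with degrees $d_x$; $\sigma:E\to\{\pm1\}$, $\sigma_{xy}=\sigma(\{x,y\})$. Signed Laplacian $\Delta^{\sigma}f(x)=\frac{1}{d_x}\sum_{y\sim x}(\sigma_{xy}f(y)-f(x))$; $\Delta$ is the case $\sigma\equiv+1$. Eigenfunction to $\lambda^\sigma$: nonzero $f$ with $-\Delta^\sigma f=\lambda^\sigma f$. $\Gamma^{\sigma}(f,g)=\frac12\{\Delta(fg)-g\Delta^{\sigma}f-f\Delta^{\sigma}g\}$, $\Gamma_2^{\sigma}(f,g)=\frac12\{\Delta\Gamma^{\sigma}(f,g)-\Gamma^{\sigma}(g,\Delta^{\sigma}f)-\Gamma^{\sigma}(f,\Delta^{\sigma}g)\}$; $|\nabla^{\sigma}f|^2(x)=\frac{1}{d_x}\sum_{y\sim x}(\sigma_{xy}f(y)-f(x))^2$. $CD^{\sigma}(K,N)$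 means $\Gamma_2^{\sigma}(f,f)(x)\ge\frac1N(\Delta^\sigma f)^2(x)+K\Gamma^\sigma(f,f)(x)$ for all $f$ and all $x\in V$. *)

(* Defs.v *)
From mathcomp Require Import all_boot all_order all_algebra.
Set Implicit Arguments. Unset Strict Implicit. Unset Printing Implicit Defensive.
Import Order.TTheory GRing.Theory Num.Theory.
Local Open Scope ring_scope.

Section SignedGraph.
Variables (R : realFieldType) (T : finType) (adj : rel T).

Definition simple_graph : Prop :=
  (forall x, ~~ adj x x) /\ (forall x y, adj x y = adj y x).
Definition connected_graph : Prop := forall x y : T, connect adj x y.

(* A signature sigma : E -> {+1,-1}, given as a symmetric function on pairs
   whose values on edges are +1 or -1 (values on non-edges are irrelevant). *)
Definition signature (sig : T -> T -> R) : Prop :=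
  (forall x y, adj x y -> sig x y = sig y x) /\
  (forall x y, adj x y -> sig x y = 1 \/ sig x y = -1).

Definition deg (x : T) : R := (#|[set y | adj x y]|)%:R.

Definition lapS (sig : T -> T -> R) (f : T -> R) (x : T) : R :=
  (deg x)^-1 * \sum_(y | adj x y) (sig x y * f y - f x).

Definition lap (f : T -> R) := lapS (fun _ _ => 1) f.

Definition GammaS (sig : T -> T -> R) (f g : T -> R) (x : T) : R :=
  2^-1 * (lap (fun z => f z * g z) x - g x * lapS sig f x - f x * lapS sig g x).

Definition Gamma2S (sig : T -> T -> R) (f g : T -> R) (x : T) : R :=
  2^-1 * (lap (GammaS sig f g) x - GammaS sig g (lapS sig f) x
           - GammaS sig f (lapS sig g) x).

Definition gradS2 (sig : T -> T -> R) (f : T -> R) (x : T) : R :=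
  (deg x)^-1 * \sum_(y | adj x y) (sig x y * f y - f x) ^+ 2.

(* N in (0, +oo]: [None] stands for N = +oo; 1/N := 0 in that case. *)
Definition invN (N : option R) : R := if N is Some n then n^-1 else 0.
Definition validN (N : option R) : Prop := if N is Some n then 0 < n else True.

Definition CDS (sig : T -> T -> R) (K : R) (N : option R) : Prop :=
  forall (f : T -> R) (x : T),
    invN N * (lapS sig f x) ^+ 2 + K * GammaS sig f f x <= Gamma2S sig f f x.

Definition eigenfunS (sig : T -> T -> R) (f : T -> R) (lam : R) : Prop :=
  (exists x, f x != 0) /\ (forall x, - lapS sig f x = lam * f x).

Definition maxsq (f : T -> R) : R := \big[Num.max/0]_(z : T) (f z ^+ 2).

End SignedGraph.

(* Main.v *)
Require Import Defs.
From mathcomp Require Import all_boot all_order all_algebra ring lra.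
Import Order.TTheory GRing.Theory Num.Theory.
Local Open Scope ring_scope.

Set Implicit Arguments. Unset Strict Implicit.
Section H.
Variables (R : realFieldType) (T : finType) (adj : rel T).

Lemma lapS_ext (s : T -> T -> R) (g h : T -> R) x :
  (forall z, g z = h z) -> lapS adj s g x = lapS adj s h x.
Proof. by move=> E; rewrite /lapS; congr (_ * _); apply: eq_bigr => y _; rewrite !E. Qed.

Lemma lapS_scale (s : T -> T -> R) (g : T -> R) a x :
  lapS adj s (fun z => a * g z) x = a * lapS adj s g x.
Proof. by rewrite /lapS [RHS]mulrCA [in RHS]mulr_sumr; congr (_ * _); apply: eq_bigr => y _; ring. Qed.

Lemma lap_add (g h : T -> R) x :
  lap adj (fun z => g z + h z) x = lap adj g x + lap adj h x.
Proof. by rewrite /lap /lapS -mulrDr -big_split; congr (_ * _); apply: eq_bigr => y _ /=; ring. Qed.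

Lemma lap_max (g : T -> R) x0 : (forall y, g y <= g x0) -> lap adj g x0 <= 0.
Proof.
move=> H; rewrite /lap /lapS; apply: mulr_ge0_le0; first by rewrite invr_ge0 ler0n.
by apply: sumr_le0 => y _; rewrite mul1r subr_le0.
Qed.

Lemma grad_ge0 (s : T -> T -> R) f x : 0 <= gradS2 adj s f x.
Proof.
rewrite /gradS2; apply: mulr_ge0; first by rewrite invr_ge0 ler0n.
by apply: sumr_ge0 => y _; apply: sqr_ge0.
Qed.

Lemma Gamma_grad (s : T -> T -> R) f x : signature adj s ->
  GammaS adj s f f x = gradS2 adj s f x / 2.
Proof.
case=> _ Hs.
have E : \sum_(y | adj x y) (s x y * f y - f x) ^+ 2 =
   \sum_(y | adj x y) (1 * (f y * f y) - f x * f x)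
   - 2 * f x * \sum_(y | adj x y) (s x y * f y - f x).
  rewrite mulr_sumr -sumrB; apply: eq_bigr => y hy.
  by case: (Hs x y hy) => ->; ring.
rewrite /GammaS /gradS2 /lap /lapS E; ring.
Qed.

Lemma maxsq_ge (f : T -> R) z : f z ^+ 2 <= maxsq f.
Proof. rewrite /maxsq. exact: le_bigmax. Qed.

Lemma argmax_ex (F : T -> R) (x : T) : exists x0, forall y, F y <= F x0.
Proof.
case: (@arg_maxP _ _ T x predT F erefl) => i _ H; exists i => y; exact: H.
Qed.
End H.

Theorem corollary3p2 (R : realFieldType) (T : finType) (adj : rel T)
  (sig : T -> T -> R) (K : R) (N : option R) (f : T -> R) (lam : R) :
  simple_graph adj -> connected_graph adj -> signature adj sig ->
  validN N -> CDS adj sig K N ->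
  eigenfunS adj sig f lam -> lam != 0 ->
  forall (x : T) (eps : R), 0 < eps ->
    gradS2 adj sig f x <=
      (((2 + eps) ^+ 2 - 4 * invN N) * lam / eps - (4 / eps + 2) * K)
        * maxsq f.
Proof.
move=> _ _ Hsig HN HCD [[x1 Hx1] Heig] Hlam x eps Heps.
rewrite /CDS in HCD.
have two0 : (2:R) != 0 by rewrite pnatr_eq0.
set G := GammaS adj sig f f.
have Hlap z : lapS adj sig f z = - lam * f z.
  by rewrite -[LHS]opprK Heig mulNr.
have HG z : gradS2 adj sig f z = 2 * G z.
  by rewrite /G Gamma_grad // mulrC divfK.
have G0 z : 0 <= G z.
  by rewrite /G Gamma_grad // divr_ge0 ?grad_ge0 ?ler0n.
have Hlapf2 z : lap adj (fun w => f w * f w) z = 2 * G z - 2 * lam * f z ^+ 2.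
  rewrite /G /GammaS Hlap mulrA divff // mul1r; ring.
have HG2 z : Gamma2S adj sig f f z = 2^-1 * lap adj G z + lam * G z.
  have E1 : lap adj (fun w => f w * lapS adj sig f w) z
          = - lam * lap adj (fun w => f w * f w) z.
    by rewrite /lap -lapS_scale; apply: lapS_ext => w; rewrite Hlap; ring.
  have E2 : lapS adj sig (lapS adj sig f) z = - lam * lapS adj sig f z.
    by rewrite -lapS_scale; apply: lapS_ext => w; rewrite Hlap.
  have E : GammaS adj sig f (lapS adj sig f) z = - lam * G z.
    rewrite /G /GammaS E1 E2 !Hlap; ring.
  by rewrite /Gamma2S E -/G; field.
have iN0 : 0 <= invN N by move: HN; rewrite /invN /validN; case: (N) => [n|] // Hn; rewrite invr_ge0 ltW.
have HCDz z : invN N * (lam * f z) ^+ 2 + K * G z <= 2^-1 * lap adj G z + lam * G z.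
  have := HCD f z; rewrite -/G HG2 Hlap mulNr sqrrN //.
have [xm Hxm] := argmax_ex (fun z => f z ^+ 2) x.
have M0 : 0 < f xm ^+ 2.
  apply: lt_le_trans (Hxm x1); by rewrite lt_neqAle sqr_ge0 andbT eq_sym sqrf_eq0.
have lam0 : 0 < lam.
  have h1 := Hlapf2 xm.
  have h2 : lap adj (fun w => f w * f w) xm <= 0.
    by apply: lap_max => y; rewrite -!expr2; exact: Hxm.
  have h3 := G0 xm.
  have : 0 <= lam by nra.
  by rewrite le_eqVlt eq_sym (negbTE Hlam).
have [xg0 HGg0] : exists xg, 0 < G xg.
  case: (boolP [exists z, 0 < G z]) => [/existsP //|/existsPn Hn].
  have L0 z : lapS adj sig f z = 0.
    have : gradS2 adj sig f z = 0.
      by rewrite HG; apply/eqP; rewrite mulf_eq0 (negbTE two0) /= eq_le G0 andbT leNgt Hn.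
    rewrite /gradS2 => /eqP; rewrite mulf_eq0 => /orP [/eqP d0 | /eqP s0].
      by rewrite /lapS d0 mul0r.
    rewrite /lapS big1 ?mulr0 // => y hy.
    have := psumr_eq0P (fun i _ => sqr_ge0 _) s0 hy.
    by move/eqP; rewrite sqrf_eq0 => /eqP.
  have := L0 x1; rewrite Hlap => /eqP; rewrite mulf_eq0 oppr_eq0 (negbTE Hlam) (negbTE Hx1).
  done.
have [xg Hxg] := argmax_ex G x.
have HGg : 0 < G xg by exact: lt_le_trans HGg0 (Hxg xg0).
have Klam : K <= lam.
  have h1 := HCDz xg.
  have h2 : lap adj G xg <= 0 by apply: lap_max.
  have h3 : 0 <= invN N * (lam * f xg) ^+ 2 by rewrite mulr_ge0 ?sqr_ge0.
  nra.
set c := eps * lam / 2 + lam - K.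
have c0 : 0 < c.
  rewrite /c; have : 0 < eps * lam / 2 by rewrite divr_gt0 ?mulr_gt0.
  lra.
set H := fun z => G z + c * (f z * f z).
have [x0 Hx0] := argmax_ex H x.
have LH : lap adj H x0 = lap adj G x0 + c * lap adj (fun w => f w * f w) x0.
  by rewrite /H lap_add /lap lapS_scale.
have key : (eps * lam / 2) * G x0 <= (c * lam - invN N * lam ^+ 2) * f x0 ^+ 2.
  have h1 : lap adj H x0 <= 0 by apply: lap_max.
  rewrite LH Hlapf2 in h1.
  have h2 := HCDz x0.
  rewrite /c in h1 *.
  nra.
have e0 : eps != 0 by rewrite gt_eqF.
set A := 2 * (c - invN N * lam) / eps + c.
have HGx0 : G x0 <= 2 * (c - invN N * lam) / eps * f x0 ^+ 2.
  have p : 0 < eps * lam / 2 by rewrite divr_gt0 ?mulr_gt0.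
  rewrite -(ler_pM2l p); apply: le_trans key _.
  rewrite le_eqVlt; apply/orP; left; apply/eqP; by field.
have HA : H x0 <= A * f x0 ^+ 2.
  by rewrite /A mulrDl /H -expr2 lerD2r; exact: HGx0.
have A0 : 0 < A.
  have h1 := Hx0 xm.
  have h2 : 0 < c * f xm ^+ 2 by rewrite mulr_gt0.
  have h3 := G0 xm.
  have h4 := sqr_ge0 (f x0).
  rewrite /H -!expr2 in h1 HA.
  nra.
have Fin : 2 * G x <= 2 * A * maxsq f.
  have h1 := Hx0 x; have h2 := maxsq_ge f x0.
  have h3 : 0 <= c * (f x * f x) by rewrite -expr2 mulr_ge0 ?sqr_ge0 // ltW.
  rewrite /H in h1 HA.
  nra.
rewrite HG; apply: le_trans Fin _.
rewrite le_eqVlt; apply/orP; left; apply/eqP; rewrite /A /c; by field.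
Qed.
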